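(* Let $k\geq1$ and $d_1,\dots,d_k\geq2$ be integers, let $T=W_{d_1}\otimes\cdots\otimes W_{d_k}$, and let $\mathscr{V}_{d_1,\dots,d_k}=\nu_{d_1,\dots,d_k}((\mathbb{P}^1)^k)$ be the Segre–Veronese variety. Let $\Gamma$ be any irreducible component of $\mathcal{S}(T,\mathscr{V}_{d_1,\dots,d_k})$. Then $\dim\Gamma\geq k$, and for every $p=(p_1,\dots,p_k)\in(\mathbb{P}^1)^k$ with $p_i\neq[x_i],[y_i]$ for all $i$, there exists $A\in\Gamma$ with $\nu_{d_1,\dots,d_k}(p)\in A$.
   Context: On the $i$-th factor use a basis $\{x_i,y_i\}$ of $\mathbb{C}^2$ and identify $S^d\mathbb{C}^2$ with binary forms; $W_{d_i}=x_i^{d_i-1}y_i$. $\nu_{d_1,\dots,d_k}:(\mathbb{P}^1)^k\to\mathbb{P}(S^{d_1}\mathbb{C}^2\otimes\cdots\otimes S^{d_k}\mathbb{C}^2)$ sends $([v_1],\dots,[v_k])\mapsto[v_1^{d_1}\otimes\cdots\otimes v_k^{d_k}]$. For a nondegenerate variety $X$ and a point $q$, $R_X(q)$ is the minimal $r$ such that $q$ lies in the span of $r$ points of $X$, and $\mathcal{S}(q,X)=\{(x_1,\dots,x_r)\in X^{(r)}: q\in\langle x_1,\dots,x_r\rangle\}$ with $r=R_X(q)$, where $X^{(r)}=X^r/\mathfrak{S}_r$ is the symmetric power; this is a constructible set whose elements are regarded as sets of $r$ points of $X$. *)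

(* Defs.v *)
From HB Require Import structures.
From mathcomp Require Import all_boot all_fingroup all_algebra finmap.
From mathcomp Require Import mpoly.
From mathcomp Require Import complex.
From mathcomp Require Import reals.

Set Implicit Arguments.
Unset Strict Implicit.
Unset Printing Implicit Defensive.

Import GRing.Theory.
Local Open Scope ring_scope.
Local Open Scope fset_scope.

Section SegreVeronese.
Variable C : fieldType.

(* A point of P^1 = P(C^2), C^2 with basis {x,y}: the class of a*x + b*y.
   Canonical representative: [a x + b y] with a <> 0 is encoded as Some (b/a)
   (representative (1, b/a)); the point [y] is encoded as None.  Thus
   [x] = Some 0 and [y] = None. *)
Definition rep1 (o : option C) : C * C := if o is Some t then (1, t) else (0, 1).

Definition cls1 (a b : C) : option C := if a == 0 then None else Some (b / a).

Definition pt (k : nat) := {ffun 'I_k -> option C}.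

(* S^{d_1}C^2 (x) ... (x) S^{d_k}C^2 identified with multihomogeneous forms of
   multidegree (d_1,...,d_k) in the variables x_i = 'X_(lshift k i),
   y_i = 'X_(rshift k i) of {mpoly C[k + k]}. *)
Definition xv (k : nat) (i : 'I_k) : {mpoly C[k + k]} := 'X_(lshift k i).
Definition yv (k : nat) (i : 'I_k) : {mpoly C[k + k]} := 'X_(rshift k i).

(* affine representative of nu_{d_1..d_k}(p) = v_1^{d_1} (x) ... (x) v_k^{d_k} *)
Definition nu (k : nat) (d : 'I_k -> nat) (p : pt k) : {mpoly C[k + k]} :=
  \prod_(i < k) ((rep1 (p i)).1 *: xv i + (rep1 (p i)).2 *: yv i) ^+ d i.

Definition Wten (k : nat) (d : 'I_k -> nat) : {mpoly C[k + k]} :=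
  \prod_(i < k) (xv i ^+ (d i).-1 * yv i).

Definition in_span (k : nat) (d : 'I_k -> nat) (q : {mpoly C[k + k]})
  (A : {fset pt k}) : Prop :=
  exists c : pt k -> C, q = \sum_(a <- A) c a *: nu d a.

Definition is_rank (k : nat) (d : 'I_k -> nat) (q : {mpoly C[k + k]}) (r : nat)
  : Prop :=
  (exists A : {fset pt k}, #|` A| = r /\ in_span d q A) /\
  (forall A : {fset pt k}, in_span d q A -> (r <= #|` A|)%N).

(* S(q, X) for r = R_X(q): the sets of r points of X spanning q
   (points of X are recorded through their parameters p, nu being injective) *)
Definition Sdec (k : nat) (d : 'I_k -> nat) (q : {mpoly C[k + k]}) (r : nat)
  (A : {fset pt k}) : Prop :=
  #|` A| = r /\ in_span d q A.

(* coordinates of an r-tuple of points of (P^1)^k, given by representatives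
   w j i = (a, b) (i.e. a x_i + b y_i) of the i-th factor of the j-th point *)
Definition nvars (r k : nat) := #|{: 'I_r * 'I_k * bool}|.

Definition env (r k : nat) (w : 'I_r -> 'I_k -> C * C) : 'I_(nvars r k) -> C :=
  fun l => let: (j, i, b) := enum_val l in if b then (w j i).2 else (w j i).1.

Definition cls_conf (r k : nat) (w : 'I_r -> 'I_k -> C * C) : 'I_r -> pt k :=
  fun j => [ffun i => cls1 (w j i).1 (w j i).2].

(* Q is (the preimage in X^r of) a Zariski closed subset of X^(r) = X^r / S_r:
   it is S_r-invariant and its affine cone in (C^2 \ 0)^(k r) is the common
   zero locus of a family F of polynomials in the 2kr coordinates. *)
Definition sym_closed (r k : nat) (Q : ('I_r -> pt k) -> Prop) : Prop :=
  (forall (s : 'S_r) (t : 'I_r -> pt k), Q t <-> Q (fun j => t (s j))) /\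
  exists F : {mpoly C[nvars r k]} -> Prop,
    forall w : 'I_r -> 'I_k -> C * C,
      (forall j i, w j i != (0, 0)) ->
      (Q (cls_conf w) <-> forall f, F f -> meval (env w) f = 0).

Definition tuple_of (r k : nat) (t : 'I_r -> pt k) (A : {fset pt k}) : Prop :=
  injective t /\ forall x : pt k, x \in A <-> exists j, t j = x.

Definition subS (k : nat) (Y Z : {fset pt k} -> Prop) : Prop :=
  forall A, Y A -> Z A.

Definition closed_in (r k : nat) (S Z : {fset pt k} -> Prop) : Prop :=
  subS Z S /\
  exists Q, sym_closed Q /\
    forall A, S A -> (Z A <-> exists t : 'I_r -> pt k, tuple_of t A /\ Q t).

Definition irreducible_in (r k : nat) (S Y : {fset pt k} -> Prop) : Prop :=
  subS Y S /\ (exists A, Y A) /\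
  forall Z1 Z2, closed_in r S Z1 -> closed_in r S Z2 ->
    (forall A, Y A -> Z1 A \/ Z2 A) -> subS Y Z1 \/ subS Y Z2.

Definition irr_component (r k : nat) (S G : {fset pt k} -> Prop) : Prop :=
  irreducible_in r S G /\
  forall Y, irreducible_in r S Y -> subS G Y -> subS Y G.

(* (Krull) dimension of the subspace G of S is >= n: there is a chain
   Y_0 < Y_1 < ... < Y_n of irreducible closed subsets of G *)
Definition dim_ge (r k : nat) (S G : {fset pt k} -> Prop) (n : nat) : Prop :=
  exists Y : nat -> {fset pt k} -> Prop,
    (forall m, (m <= n)%N ->
       irreducible_in r S (Y m) /\
       exists Z, closed_in r S Z /\ forall A, Y m A <-> G A /\ Z A) /\
    (forall m, (m < n)%N ->
       subS (Y m) (Y m.+1) /\ exists A, Y m.+1 A /\ ~ Y m A).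

End SegreVeronese.

(* Main.v *)
Require Import Defs.
From HB Require Import structures.
From mathcomp Require Import all_boot all_fingroup all_algebra finmap.
From mathcomp Require Import mpoly.
From mathcomp Require Import complex.
From mathcomp Require Import reals.
From Stdlib Require Import Classical FunctionalExtensionality.
Local Open Scope ring_scope.
Local Open Scope fset_scope.
Set Implicit Arguments.
Unset Strict Implicit.
Unset Printing Implicit Defensive.
Import GRing.Theory Num.Theory.


Section Work.
Variable C : numFieldType.
Variable k : nat.

Definition sc1 (mu : C) (o : option C) := if o is Some t then Some (mu * t) else None.
Definition scp (i : 'I_k) (mu : C) (a : pt C k) : pt C k :=
  [ffun j => if j == i then sc1 mu (a j) else a j].
Definition scA i mu (A : {fset pt C k}) : {fset pt C k} := [fset scp i mu a | a in A].

Lemma scpK i mu : mu != 0 -> cancel (scp i mu) (scp i mu^-1).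
Proof.
move=> mu0 a; apply/ffunP => j; rewrite !ffunE.
case: eqP => [->|//].
by case: (a i) => //= t; rewrite mulKf.
Qed.

Lemma scp_inj i mu : mu != 0 -> injective (scp i mu).
Proof. by move=> mu0; apply: can_inj (scpK i mu0). Qed.

Lemma scp1 i a : scp i 1 a = a.
Proof.
apply/ffunP => j; rewrite !ffunE; case: eqP => [->|//].
by case: (a i) => //= t; rewrite mul1r.
Qed.

Lemma scA1 i A : scA i 1 A = A.
Proof.
apply/fsetP => a; apply/imfsetP/idP => [[b bA ->]|aA]; first by rewrite scp1.
by exists a => //; rewrite scp1.
Qed.

Lemma card_scA i mu A : mu != 0 -> #|` scA i mu A| = #|` A|.
Proof. by move=> mu0; rewrite card_imfset //; apply: scp_inj. Qed.

Lemma mem_scA i mu A a : mu != 0 -> (scp i mu a \in scA i mu A) = (a \in A).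
Proof. by move=> mu0; rewrite mem_imfset //; apply: scp_inj. Qed.

Variable r : nat.

Lemma enum_ex (A : {fset pt C k}) : #|` A| = r -> exists t : 'I_r -> pt C k, Defs.tuple_of t A.
Proof.
move=> cA.
pose x0 : pt C k := [ffun => None].
exists (fun j => nth x0 A j); split.
  move=> j1 j2 /eqP; rewrite nth_uniq ?fset_uniq ?cA ?ltn_ord //.
  by move/eqP/val_inj.
move=> x; split.
  move=> xA; have hi : (index x A < r)%N by rewrite -cA index_mem.
  by exists (Ordinal hi) => /=; rewrite nth_index.
by move=> [j <-]; rewrite mem_nth // cA.
Qed.

Lemma tuple_perm (A : {fset pt C k}) t t' : Defs.tuple_of t A -> Defs.tuple_of t' A ->
  exists s : 'S_r, forall j, t' j = t (s j).
Proof.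
move=> [ti tA] [ti' tA'].
have ex : forall j, exists j', t j' = t' j.
  by move=> j; apply/tA; apply/tA'; exists j.
pose f j := odflt j [pick j' | t j' == t' j].
have fP : forall j, t (f j) = t' j.
  move=> j; rewrite /f; case: pickP => [j' /eqP //|H].
  by case: (ex j) => j' e; move: (H j'); rewrite e eqxx.
have finj : injective f by move=> j1 j2 e; apply: ti'; rewrite -!fP e.
by exists (perm finj) => j; rewrite permE fP.
Qed.

Lemma tuple_sc i mu (A : {fset pt C k}) (t : 'I_r -> pt C k) : mu != 0 -> Defs.tuple_of t A ->
  Defs.tuple_of (fun j => scp i mu (t j)) (scA i mu A).
Proof.
move=> mu0 [ti tA]; split.
  by move=> j1 j2 /(scp_inj mu0) /ti.
move=> x; split.
  by move=> /imfsetP [a /tA [j <-] ->]; exists j.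
by move=> [j <-]; apply/imfsetP; exists (t j) => //; apply/tA; exists j.
Qed.

End Work.

Local Close Scope fset_scope.


Section Poly.
Variable C : numFieldType.

Lemma scl_mpoly n (c : 'I_n -> C) (f : {mpoly C[n]}) :
  exists g : {mpoly C[n]}, forall v, meval v g = meval (fun l => c l * v l) f.
Proof.
exists (f \mPo [tuple c l *: 'X_l | l < n]) => v.
rewrite comp_mpoly_meval; apply: meval_eq => l.
by rewrite tnth_mktuple mevalZ mevalXU.
Qed.

Lemma uni_mpoly n (a b : 'I_n -> C) (f : {mpoly C[n]}) :
  exists P : {poly C}, forall mu, P.[mu] = meval (fun l => a l + mu * b l) f.
Proof.
exists (\sum_(m <- msupp f) f@_m *: \prod_(l < n) ((a l)%:P + b l *: 'X)^+ (m l)).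
move=> mu; rewrite mevalE horner_sum; apply: eq_bigr => m _.
rewrite hornerZ horner_prod; congr (_ * _); apply: eq_bigr => l _.
by rewrite horner_exp hornerD hornerC hornerZ hornerX mulrC.
Qed.

Lemma poly_nz_root (P1 P2 : {poly C}) mu1 mu2 :
  P1.[mu1] != 0 -> P2.[mu2] != 0 ->
  exists mu, mu != 0 /\ P1.[mu] != 0 /\ P2.[mu] != 0.
Proof.
move=> h1 h2.
have nz1 : P1 != 0 by apply: contraNneq h1 => ->; rewrite horner0.
have nz2 : P2 != 0 by apply: contraNneq h2 => ->; rewrite horner0.
set P := P1 * P2 * 'X.
have nzP : P != 0 by rewrite !mulf_neq0 ?polyX_eq0.
pose rs := [seq (i.+1)%:R : C | i <- iota 0 (size P)].
have urs : uniq rs.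
  rewrite map_inj_uniq ?iota_uniq // => i j /eqP; rewrite eqr_nat eqSS.
  by move/eqP.
have : ~~ all (root P) rs.
  apply/negP => allr; have := max_poly_roots nzP allr urs.
  by rewrite size_map size_iota ltnn.
case/allPn => x /mapP [i _ ->] {x}; rewrite rootE /P !hornerM => hx.
exists (i.+1)%:R; split; first by rewrite pnatr_eq0.
by move: hx; rewrite !mulf_eq0 !negb_or => /andP [/andP [-> ->]].
Qed.

End Poly.


Section Topo.
Variable C : numFieldType.
Variables k r : nat.

Lemma cls1_rep1 (o : option C) : cls1 (rep1 o).1 (rep1 o).2 = o.
Proof. by case: o => [t|] /=; rewrite /cls1 ?oner_eq0 ?eqxx ?divr1. Qed.

Lemma rep1_nz (o : option C) : rep1 o != (0, 0).
Proof. by case: o => [t|] /=; rewrite xpair_eqE ?oner_eq0 ?andbF. Qed.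

Lemma cls1_sc (mu a b : C) : cls1 a (mu * b) = sc1 mu (cls1 a b).
Proof. by rewrite /cls1; case: eqP => //= _; rewrite mulrA. Qed.

Lemma cls1_eq (a b : C) (o : option C) : (a, b) != (0, 0) ->
  (cls1 a b = o) <-> (a * (rep1 o).2 - b * (rep1 o).1 = 0).
Proof.
move=> nz; rewrite /cls1; case: o => [t|] /=.
  case: eqP => [a0|/eqP a0]; split => //.
  - move: nz; rewrite a0 mul0r sub0r mulr1 => nz /eqP; rewrite oppr_eq0 => /eqP b0.
    by move: nz; rewrite b0 eqxx.
  - by case => <-; rewrite mulr1 mulrCA mulfV // mulr1 subrr.
  - by rewrite mulr1 => /eqP; rewrite subr_eq0 => /eqP <-; congr Some; rewrite mulrAC divff // mul1r.
by rewrite mulr1 mulr0 subr0; case: eqP.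
Qed.

Definition scw i (mu : C) (w : 'I_r -> 'I_k -> C * C) : 'I_r -> 'I_k -> C * C :=
  fun j i' => if i' == i then ((w j i').1, mu * (w j i').2) else w j i'.

Definition cnd (i : 'I_k) (l : 'I_(nvars r k)) : bool :=
  let: (j, i', b) := enum_val l in (i' == i) && b.

Lemma env_scw i mu w l :
  env (scw i mu w) l = (if cnd i l then mu else 1) * env w l.
Proof.
rewrite /env /cnd /scw; case: (enum_val l) => [[j i'] b] /=.
by case: eqP => _; case: b => /=; rewrite ?mul1r.
Qed.

Lemma cls_conf_scw i mu w :
  cls_conf (scw i mu w) = fun j => scp i mu (cls_conf w j).
Proof.
apply: functional_extensionality => j; apply/ffunP => i'.
rewrite /cls_conf /scw !ffunE; case: eqP => // _.
by rewrite cls1_sc.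
Qed.

Lemma scw_nz i mu w : mu != 0 -> (forall j i', w j i' != (0, 0)) ->
  forall j i', scw i mu w j i' != (0, 0).
Proof.
move=> mu0 nz j i'; rewrite /scw; case: (i' =P i) => _; last exact: nz.
move: (nz j i'); case: (w j i') => a b /=; rewrite !xpair_eqE.
by rewrite mulf_eq0 (negbTE mu0).
Qed.

Definition repw (t : 'I_r -> pt C k) : 'I_r -> 'I_k -> C * C := fun j i => rep1 (t j i).

Lemma cls_conf_repw t : cls_conf (repw t) = t.
Proof.
apply: functional_extensionality => j; apply/ffunP => i.
by rewrite /cls_conf /repw ffunE cls1_rep1.
Qed.

Lemma repw_nz t j i : repw t j i != (0, 0).
Proof. exact: rep1_nz. Qed.

Variable S : {fset pt C k} -> Prop.
Hypothesis Scard : forall A, S A -> #|` A| = r.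
Hypothesis Sstable : forall i mu A, mu != 0 -> S A -> S (scA i mu A).

Lemma closedP Z : closed_in r S Z -> exists Q : ('I_r -> pt C k) -> Prop,
  sym_closed Q /\ forall A t, S A -> Defs.tuple_of t A -> (Z A <-> Q t).
Proof.
move=> [_ [Q [[Qs QF] QZ]]]; exists Q; split => //.
move=> A t SA tA; rewrite QZ //; split; last by move=> Qt; exists t.
move=> [t' [t'A Qt']]; have [s es] := tuple_perm tA t'A.
have e : t' = (fun j => t (s j)) by apply: functional_extensionality.
by apply/(Qs s t); rewrite -e.
Qed.

Lemma closed_poly Z B i : closed_in r S Z -> S B ->
  exists w : 'I_r -> 'I_k -> C * C, (forall j i', w j i' != (0, 0)) /\
  exists F : {mpoly C[nvars r k]} -> Prop, forall mu, mu != 0 ->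
    (Z (scA i mu B) <-> forall f, F f -> meval (env (scw i mu w)) f = 0).
Proof.
move=> cZ SB; have [Q [[Qs [F QF]] QZ]] := closedP cZ.
have [t tB] := enum_ex (Scard SB).
exists (repw t); split; first exact: repw_nz.
exists F => mu mu0.
rewrite (QZ _ _ (Sstable i mu0 SB) (tuple_sc i mu0 tB)).
rewrite -QF; last by apply: scw_nz => //; exact: repw_nz.
by rewrite cls_conf_scw cls_conf_repw.
Qed.


Definition prei i mu (Z : {fset pt C k} -> Prop) := fun A => S A /\ Z (scA i mu A).

Lemma pre_closed i mu Z : mu != 0 -> closed_in r S Z -> closed_in r S (prei i mu Z).
Proof.
move=> mu0 cZ; have [Q [[Qs [F QF]] QZ]] := closedP cZ.
split; first by move=> A [].
exists (fun t => Q (fun j => scp i mu (t j))); split; first split.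
- by move=> s t; apply: (Qs s (fun j => scp i mu (t j))).
- exists (fun g => exists f, F f /\ forall v,
    meval v g = meval (fun l => (if cnd i l then mu else 1) * v l) f).
  move=> w wnz; rewrite -cls_conf_scw QF; last exact: scw_nz.
  split.
  + move=> H g [f [Ff Hg]]; rewrite Hg -(H f Ff); apply: meval_eq => l.
    by rewrite env_scw.
  + move=> H f Ff; have [g Hg] := @scl_mpoly C _ (fun l => if cnd i l then mu else 1) f.
    rewrite (meval_eq f (env_scw i mu w)) -Hg; apply: H; by exists f.
- move=> A SA; split.
  + move=> [_ ZA]; have [t tA] := enum_ex (Scard SA); exists t; split => //.
    by apply/(QZ _ _ (Sstable i mu0 SA) (tuple_sc i mu0 tA)).
  + move=> [t [tA Qt]]; split => //.
    by apply/(QZ _ _ (Sstable i mu0 SA) (tuple_sc i mu0 tA)).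
Qed.

Definition orbt i (Y : {fset pt C k} -> Prop) :=
  fun B => exists mu B', mu != 0 /\ Y B' /\ B = scA i mu B'.

Lemma orb_irr i Y : irreducible_in r S Y -> irreducible_in r S (orbt i Y).
Proof.
move=> [YS [[A0 YA0] Yirr]]; split; [|split].
- by move=> B [mu [B' [mu0 [YB' ->]]]]; apply: Sstable => //; apply: YS.
- by exists A0, 1, A0; rewrite scA1 oner_neq0.
move=> Z1 Z2 c1 c2 cov.
have key : forall mu, mu != 0 -> subS Y (prei i mu Z1) \/ subS Y (prei i mu Z2).
  move=> mu mu0; apply: Yirr; try exact: pre_closed.
  move=> A YA; have SA := YS A YA.
  have : orbt i Y (scA i mu A) by exists mu, A.
  by case/cov => ?; [left|right].
case: (classic (subS (orbt i Y) Z1)) => [h|H1]; first by left.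
case: (classic (subS (orbt i Y) Z2)) => [h|H2]; first by right.
exfalso.
have [B1 nB1] : exists B, ~ (orbt i Y B -> Z1 B) by apply: not_all_ex_not.
have [[mu1 [B1' [mu10 [YB1 eB1]]]] nZ1] := imply_to_and _ _ nB1.
have [B2 nB2] : exists B, ~ (orbt i Y B -> Z2 B) by apply: not_all_ex_not.
have [[mu2 [B2' [mu20 [YB2 eB2]]]] nZ2] := imply_to_and _ _ nB2.
have [w1 [w1nz [F1 HF1]]] := closed_poly i c1 (YS _ YB1).
have [w2 [w2nz [F2 HF2]]] := closed_poly i c2 (YS _ YB2).
have [f1 [Ff1 f1nz]] : exists f, F1 f /\ meval (env (scw i mu1 w1)) f != 0.
  apply: NNPP => H; apply: nZ1; rewrite eB1; apply/HF1 => // f Ff.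
  apply/eqP; apply: NNPP => Hf; apply: H; exists f; split => //; exact/negP.
have [f2 [Ff2 f2nz]] : exists f, F2 f /\ meval (env (scw i mu2 w2)) f != 0.
  apply: NNPP => H; apply: nZ2; rewrite eB2; apply/HF2 => // f Ff.
  apply/eqP; apply: NNPP => Hf; apply: H; exists f; split => //; exact/negP.
have [P1 HP1] := @uni_mpoly C _ (fun l => if cnd i l then 0 else env w1 l)
                          (fun l => if cnd i l then env w1 l else 0) f1.
have [P2 HP2] := @uni_mpoly C _ (fun l => if cnd i l then 0 else env w2 l)
                          (fun l => if cnd i l then env w2 l else 0) f2.
have eP1 : forall mu, P1.[mu] = meval (env (scw i mu w1)) f1.
  move=> mu; rewrite HP1; apply: meval_eq => l; rewrite env_scw.
  by case: (cnd i l); rewrite ?add0r ?mulr0 ?addr0 ?mul1r.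
have eP2 : forall mu, P2.[mu] = meval (env (scw i mu w2)) f2.
  move=> mu; rewrite HP2; apply: meval_eq => l; rewrite env_scw.
  by case: (cnd i l); rewrite ?add0r ?mulr0 ?addr0 ?mul1r.
have [mu [mu0 [n1 n2]]] := @poly_nz_root C P1 P2 mu1 mu2
  ltac:(by rewrite eP1) ltac:(by rewrite eP2).
case: (key mu mu0) => HY.
- case: (HY _ YB1) => _ /(HF1 mu mu0) /(_ f1 Ff1) /eqP.
  by rewrite -eP1 (negbTE n1).
- case: (HY _ YB2) => _ /(HF2 mu mu0) /(_ f2 Ff2) /eqP.
  by rewrite -eP2 (negbTE n2).
Qed.

Lemma single_irr A : S A -> irreducible_in r S (fun B => B = A).
Proof.
move=> SA; split; [by move=> B -> | split; [by exists A | ]].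
move=> Z1 Z2 _ _ cov.
by case: (cov A erefl) => h; [left|right] => B ->.
Qed.

Definition clo (O : {fset pt C k} -> Prop) :=
  fun A => S A /\ forall Z, closed_in r S Z -> subS O Z -> Z A.

Lemma cl_closed O : closed_in r S (clo O).
Proof.
split; first by move=> A [].
pose cond (Z : {fset pt C k} -> Prop) (Q' : ('I_r -> pt C k) -> Prop) :=
  subS Z S /\ subS O Z /\ sym_closed Q' /\
  (forall A, S A -> (Z A <-> exists t, Defs.tuple_of t A /\ Q' t)).
exists (fun t => forall Z Q', cond Z Q' -> Q' t); split; first split.
- move=> s t; split => H Z Q' c; case: (c) => _ [_ [[Qs _] _]].
  + by apply (proj1 (Qs s t)); apply: H c.
  + by apply (proj2 (Qs s t)); apply: H c.
- exists (fun f => exists Z Q' (F' : {mpoly C[nvars r k]} -> Prop), cond Z Q' /\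
    (forall w, (forall j i, w j i != (0, 0)) ->
      (Q' (cls_conf w) <-> forall g, F' g -> meval (env w) g = 0)) /\ F' f).
  move=> w wnz; split.
  + move=> H f [Z [Q' [F' [c [HF' Ff]]]]].
    exact: (proj1 (HF' w wnz) (H Z Q' c)) f Ff.
  + move=> H Z Q' c; case: (c) => _ [_ [[_ [F' HF']] _]].
    apply/(HF' w wnz) => g Fg; apply: H; by exists Z, Q', F'.
- move=> A SA; split.
  + move=> [_ HA]; have [t tA] := enum_ex (Scard SA); exists t; split => // Z Q' c.
    case: (c) => ZS [OZ [sQ ZQ]].
    have cZ : closed_in r S Z by split => //; exists Q'.
    have := HA Z cZ OZ; rewrite (ZQ A SA) => -[t' [t'A Qt']].
    have [s es] := tuple_perm tA t'A.
    have e : t' = (fun j => t (s j)) by apply: functional_extensionality.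
    by apply/(sQ.1 s t); rewrite -e.
  + move=> [t [tA Ht]]; split => // Z cZ OZ.
    case: (cZ) => ZS [Q' [sQ ZQ]].
    apply/(ZQ A SA); exists t; split => //; exact: Ht (conj ZS (conj OZ (conj sQ ZQ))).
Qed.

Lemma cl_min O Z : closed_in r S Z -> subS O Z -> subS (clo O) Z.
Proof. by move=> cZ OZ A [_ H]; apply: H. Qed.

Lemma cl_sub O : subS O S -> subS O (clo O).
Proof. by move=> OS A OA; split; [apply: OS | move=> Z _ OZ; apply: OZ]. Qed.

Lemma cl_mono O1 O2 : subS O1 O2 -> subS (clo O1) (clo O2).
Proof. by move=> h A [SA H]; split => // Z cZ OZ; apply: H => // B /h /OZ. Qed.

Lemma sandwich O Y : irreducible_in r S O -> subS O Y -> subS Y (clo O) ->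
  irreducible_in r S Y.
Proof.
move=> [OS [[A OA] Oirr]] OY YO; split; [|split].
- by move=> B /YO [].
- by exists A; apply: OY.
move=> Z1 Z2 c1 c2 cov.
case: (Oirr Z1 Z2 c1 c2 (fun B OB => cov B (OY B OB))) => h; [left|right].
- by move=> B /YO; apply: cl_min.
- by move=> B /YO; apply: cl_min.
Qed.

Lemma cls1_eq' (p : C * C) (o : option C) : p != (0, 0) ->
  (cls1 p.1 p.2 = o) <-> (p.1 * (rep1 o).2 - p.2 * (rep1 o).1 = 0).
Proof. by case: p => a b; apply: cls1_eq. Qed.

Definition Zv i (V : {fset option C}) :=
  fun A : {fset pt C k} => S A /\ forall a, a \in A -> a i \in V.

Lemma Zv_closed i V : closed_in r S (Zv i V).
Proof.
split; first by move=> A [].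
exists (fun t => forall j, t j i \in V); split; first split.
- move=> s t; split => H j; first exact: H.
  by have := H ((s^-1)%g j); rewrite permKV.
- exists (fun f => exists j, f = \prod_(v <- V)
     ('X_(enum_rank (j, i, false)) * ((rep1 v).2)%:MP
      - 'X_(enum_rank (j, i, true)) * ((rep1 v).1)%:MP)).
  move=> w wnz; split.
  + move=> H f [j ->]; rewrite rmorph_prod /=.
    apply/eqP; rewrite prodf_seq_eq0; apply/hasP; exists (cls_conf w j i); first exact: H.
    rewrite /= mevalB !mevalM !mevalXU !mevalC /env !enum_rankK /=; apply/eqP.
    by apply/(cls1_eq' _ (wnz j i)); rewrite /cls_conf ffunE.
  + move=> H j; have := H _ (ex_intro _ j erefl); rewrite rmorph_prod /= => /eqP.
    rewrite prodf_seq_eq0 => /hasP [v vV] /=.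
    rewrite mevalB !mevalM !mevalXU !mevalC /env !enum_rankK /= => /eqP.
    by move/(cls1_eq' _ (wnz j i)) => e; rewrite /cls_conf ffunE e.
- move=> A SA; split.
  + move=> [_ H]; have [t tA] := enum_ex (Scard SA); exists t; split => // j.
    by apply: H; apply/(tA.2 (t j)); exists j.
  + by move=> [t [tA Ht]]; split => // a /(tA.2 a) [j <-]; apply: Ht.
Qed.

End Topo.


Section Sdec.
Variable C : numFieldType.
Variable k : nat.
Variable d : 'I_k -> nat.

Definition fac (a : pt C k) (j : 'I_k) : {mpoly C[k + k]} :=
  ((rep1 (a j)).1 *: xv C j + (rep1 (a j)).2 *: yv C j) ^+ d j.

Lemma nuE a : nu d a = \prod_j fac a j.
Proof. by []. Qed.

Variable i : 'I_k.
Variable mu : C.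

Definition lqs : (k + k).-tuple {mpoly C[k + k]} :=
  [tuple (if l == rshift k i then mu *: 'X_l else 'X_l) | l < k + k].

Definition sgm (p : {mpoly C[k + k]}) : {mpoly C[k + k]} := p \mPo lqs.

Lemma sigX l : sgm 'X_l = if l == rshift k i then mu *: 'X_l else 'X_l.
Proof. by rewrite /sgm comp_mpolyXU -tnth_nth tnth_mktuple. Qed.

Lemma sigD p q : sgm (p + q) = sgm p + sgm q. Proof. exact: rmorphD. Qed.
Lemma sigM p q : sgm (p * q) = sgm p * sgm q. Proof. exact: rmorphM. Qed.
Lemma sigXn p n : sgm (p ^+ n) = sgm p ^+ n. Proof. exact: rmorphXn. Qed.
Lemma sigZ c p : sgm (c *: p) = c *: sgm p. Proof. exact: comp_mpolyZ. Qed.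
Lemma sig_prod (F : 'I_k -> {mpoly C[k + k]}) :
  sgm (\prod_j F j) = \prod_j sgm (F j).
Proof. exact: rmorph_prod. Qed.
Lemma sig_sum (T : Type) (s : seq T) (F : T -> {mpoly C[k + k]}) :
  sgm (\sum_(a <- s) F a) = \sum_(a <- s) sgm (F a).
Proof. exact: raddf_sum. Qed.

Lemma sig_xv j : sgm (xv C j) = xv C j.
Proof. by rewrite /xv sigX eq_shift. Qed.

Lemma sig_yv j : sgm (yv C j) = if j == i then mu *: yv C j else yv C j.
Proof. by rewrite /yv sigX eq_shift. Qed.

Lemma prod_upd (F : 'I_k -> {mpoly C[k + k]}) c :
  \prod_j (if j == i then c *: F j else F j) = c *: \prod_j F j.
Proof.
rewrite (bigD1 i) //= eqxx [in RHS](bigD1 i) //= -scalerAl; congr (_ *: (_ * _)).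
by apply: eq_bigr => j /negbTE ->.
Qed.

Definition kap (a : pt C k) : C := if a i is None then mu ^+ d i else 1.

Lemma sig_fac a j :
  sgm (fac a j) = if j == i then kap a *: fac (scp i mu a) j else fac (scp i mu a) j.
Proof.
rewrite /fac sigXn sigD !sigZ sig_xv sig_yv /scp ffunE.
case: (j =P i) => [->|_] //; rewrite /kap.
case: (a i) => [t|] /=.
  by rewrite scale1r scalerA mulrC.
by rewrite !scale0r !add0r !scale1r exprZn.
Qed.

Lemma sig_nu a : sgm (nu d a) = kap a *: nu d (scp i mu a).
Proof.
rewrite !nuE sig_prod.
by under eq_bigr do rewrite sig_fac; rewrite prod_upd.
Qed.

Lemma sig_T : sgm (Wten C d) = mu *: Wten C d.
Proof.
rewrite /Wten sig_prod -prod_upd; apply: eq_bigr => j _.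
rewrite sigM sigXn sig_xv sig_yv.
by case: eqP => _ //; rewrite scalerAr.
Qed.

End Sdec.

Section Sdec2.
Variable C : numFieldType.
Variable k : nat.
Variable d : 'I_k -> nat.

Lemma span_sc i mu A : mu != 0 -> in_span d (Wten C d) A ->
  in_span d (Wten C d) (scA i mu A).
Proof.
move=> mu0 [c HT].
exists (fun b => mu^-1 * c (scp i mu^-1 b) * kap d i mu (scp i mu^-1 b)).
have e : sgm i mu (Wten C d) = sgm i mu (\sum_(a <- A) c a *: nu d a) by rewrite -HT.
rewrite sig_T sig_sum in e.
rewrite /scA big_imfset /=; last by move=> x y _ _; apply: scp_inj.
apply: (scalerI mu0); rewrite e scaler_sumr; apply: eq_bigr => a _.
rewrite sigZ sig_nu scpK // !scalerA; congr (_ *: _).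
by rewrite !mulrA mulfV // mul1r mulrC.
Qed.

Lemma mcoeff_zero (l : 'I_(k + k)) e (h : {mpoly C[k + k]}) (m : 'X_{1.. k + k}) :
  (m l < e)%N -> ('X_l ^+ e * h)@_m = 0.
Proof.
move=> lt; rewrite [h]mpolyE mulr_sumr raddf_sum /=; apply: big1 => m' _.
rewrite -scalerAr mcoeffZ mpolyXn -mpolyXD mcoeffX.
suff -> : ((U_(l) *+ e + m')%MM == m) = false by rewrite mulr0.
apply/negbTE; apply: contraTneq lt => <-.
by rewrite -leqNgt mnmDE mulmnE mnm1E eqxx mul1n leq_addr.
Qed.

Definition mT : 'X_{1.. k + k} :=
  [multinom [tuple (match split l with inl j => (d j).-1 | inr j => 1%N end) | l < k + k]].

Lemma mT_l j : mT (lshift k j) = (d j).-1.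
Proof. by rewrite /mT mnmE (unsplitK (inl j)). Qed.

Lemma mT_r j : mT (rshift k j) = 1%N.
Proof. by rewrite /mT mnmE (unsplitK (inr j)). Qed.

Lemma T_mon : Wten C d = 'X_[mT].
Proof.
rewrite mpolyXE_id big_split_ord /= /Wten big_split /=; congr (_ * _).
  by apply: eq_bigr => j _; rewrite mT_l.
by apply: eq_bigr => j _; rewrite mT_r expr1.
Qed.

Lemma gen_pt A : (forall j, 1 < d j)%N -> in_span d (Wten C d) A ->
  exists a, a \in A /\ forall j, a j != None /\ a j != Some 0.
Proof.
move=> d2 [c HT]; apply: NNPP => H.
have zero : forall a, a \in A -> (nu d a)@_mT = 0.
  move=> a aA.
  have [j hj] : exists j, ~ (a j != None /\ a j != Some 0).
    apply: not_all_ex_not => H'; apply: H; exists a; split => //.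
  rewrite nuE (bigD1 j) //=.
  have d0 : (0 < d j)%N by apply: leq_trans (d2 j).
  case E : (a j) hj => [t|] hj.
  - have t0 : t = 0.
      by apply: NNPP => t0; apply: hj; split => //; apply/eqP => -[].
    have -> : fac d a j = 'X_(lshift k j) ^+ d j.
      by rewrite /fac E t0 /= scale1r scale0r addr0.
    by apply: mcoeff_zero; rewrite mT_l prednK ?ltnSn // ltnW.
  - have -> : fac d a j = 'X_(rshift k j) ^+ d j.
      by rewrite /fac E /= scale0r add0r scale1r.
    by apply: mcoeff_zero; rewrite mT_r.
have h1 : (Wten C d)@_mT = 1 by rewrite T_mon mcoeffX eqxx.
have h0 : (Wten C d)@_mT = 0.
  rewrite HT raddf_sum /= big1_seq // => a /andP [_ aA].
  by rewrite mcoeffZ zero // mulr0.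
by move: (oner_neq0 C); rewrite -h1 h0 eqxx.
Qed.

End Sdec2.


Fixpoint orbs (C : numFieldType) k (A0 : {fset pt C k}) (m : nat) : {fset pt C k} -> Prop :=
  match m with
  | 0 => fun B => B = A0
  | m'.+1 => match (insub m' : option 'I_k) with
             | Some j => orbt j (orbs A0 m')
             | None => orbs A0 m'
             end
  end.

Lemma main_gen (C : numFieldType) k (d : 'I_k -> nat) r (G : {fset pt C k} -> Prop) :
  (forall i, 2 <= d i)%N -> irr_component r (Sdec d (Wten C d) r) G ->
  dim_ge r (Sdec d (Wten C d) r) G k /\
  forall p : pt C k, (forall i, p i != None /\ p i != Some 0) ->
    exists A, G A /\ (p \in A)%fset.
Proof.
move=> d2 [[GS [[A0 GA0] Girr]] Gmax].
set S := Sdec d (Wten C d) r.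
have Scard : forall A, S A -> #|` A| = r by move=> A [].
have Sst : forall i mu A, mu != 0 -> S A -> S (scA i mu A).
  by move=> i mu A mu0 [cA sA]; split; [rewrite card_scA | apply: span_sc].
have Gi : irreducible_in r S G := conj GS (conj (ex_intro _ A0 GA0) Girr).
have Ginv : forall i mu B, mu != 0 -> G B -> G (scA i mu B).
  move=> i mu B mu0 GB.
  apply: (Gmax (orbt i G) (orb_irr Scard Sst i Gi)).
  - by move=> A GA; exists 1, A; rewrite scA1 oner_neq0.
  - by exists mu, B.
have [a0 [a0A0 a0g]] := gen_pt d2 (GS A0 GA0).2.
split.
  have O_irr : forall m, irreducible_in r S (orbs A0 m).
    elim => [|m IH] /=; first exact: single_irr (GS _ GA0).
    case: insubP => [j _ _|_] //. exact: (orb_irr Scard Sst j IH).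
  have O_G : forall m, subS (orbs A0 m) G.
    elim => [|m IH] /=; first by move=> B ->.
    case: insubP => [j _ _|_] //.
    by move=> B [mu [B' [mu0 [OB' ->]]]]; apply: Ginv => //; apply: IH.
  have O_mono : forall m, subS (orbs A0 m) (orbs A0 m.+1).
    move=> m B OB /=; case: insubP => [j _ _|_] //.
    by exists 1, B; rewrite scA1 oner_neq0.
  have O_S : forall m, subS (orbs A0 m) S := fun m B OB => GS _ (O_G m B OB).
  have A0_O : forall m, orbs A0 m A0.
    by elim => [|m IH] //; apply: O_mono IH.
  have O_inv : forall m (j0 : 'I_k), (m <= j0)%N -> forall B, orbs A0 m B ->
      forall b, (b \in B)%fset -> (b j0 \in [fset a j0 | a : pt C k in A0])%fset.
    elim => [|m IH] j0 hm B /=.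
      by move=> -> b bA; apply/imfsetP; exists b.
    case: insubP => [j hj ej|_] OB; last by apply: IH => //; apply: ltnW.
    case: OB => mu [B' [mu0 [OB' ->]]] b /imfsetP [b' b'B ->].
    rewrite /scp ffunE.
    have -> : (j0 == j) = false.
      by apply/negbTE/eqP => e; move: hm; rewrite e ej ltnn.
    exact: IH (ltnW hm) _ OB' _ b'B.
  exists (fun m A => G A /\ clo r S (orbs A0 m) A); split.
    move=> m _; split.
      apply: (sandwich (O_irr m)).
        by move=> B OB /=; split; [exact: (O_G m B OB) | exact: (cl_sub r (O_S m) OB)].
      by move=> B [].
    by exists (clo r S (orbs A0 m)); split => //; apply: cl_closed Scard _.
  move=> m mk; split.
    by move=> B [GB clB]; split => //; apply: (cl_mono (O_mono m)).
  pose j0 : 'I_k := Ordinal mk.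
  pose V := [fset a j0 | a : pt C k in A0]%fset.
  case: (a0g j0); case Ea : (a0 j0) => [al|] //= _ al0.
  have [n hn] : exists n : nat, (Some ((n.+1)%:R * al) \notin V)%fset.
    pose L := [seq Some ((n.+1)%:R * al) | n <- iota 0 (size V).+1].
    have uL : uniq L.
      rewrite map_inj_uniq ?iota_uniq // => x y [] /(mulIf al0) /eqP.
      by rewrite eqr_nat eqSS => /eqP.
    have : ~~ all (fun x => x \in V)%fset L.
      apply/negP => /allP sub; have := uniq_leq_size uL sub.
      by rewrite size_map size_iota ltnn.
    by case/allPn => x /mapP [n _ ->] hx; exists n.
  set mu : C := (n.+1)%:R.
  have mu0 : mu != 0 by rewrite pnatr_eq0.
  have OB : orbs A0 m.+1 (scA j0 mu A0).
    rewrite /=; case: insubP => [j _ ej|]; last by rewrite mk.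
    have -> : j = j0 by apply: val_inj; rewrite ej.
    by exists mu, A0; split; [|split; [apply: A0_O|]].
  exists (scA j0 mu A0); split.
    by split; [apply: O_G OB | exact: (cl_sub r (O_S _) OB)].
  move=> [_ clB].
  have ZV : Zv S j0 V (scA j0 mu A0).
    apply: (cl_min (Zv_closed Scard j0 V)) clB => B OB'.
    by split; [apply: O_S OB' | move=> b bB; apply: (O_inv m j0 (leqnn m) B OB' b bB)].
  case: ZV => _ /(_ (scp j0 mu a0)); rewrite mem_scA // => /(_ a0A0).
  by rewrite /scp ffunE eqxx Ea /= (negbTE hn).
move=> p pg.
have step : forall m, (m <= k)%N -> exists B, G B /\ exists b, (b \in B)%fset /\
    (forall j : 'I_k, (j < m)%N -> b j = p j) /\ (forall j : 'I_k, (m <= j)%N -> b j = a0 j).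
  elim => [_|m IH lemk].
    by exists A0; split => //; exists a0; split => //; split => // j.
  have [B [GB [b [bB [h1 h2]]]]] := IH (ltnW lemk).
  pose j0 : 'I_k := Ordinal lemk.
  case: (a0g j0); case Ea : (a0 j0) => [al|] //= _ al0.
  case: (pg j0); case Ep : (p j0) => [pp|] //= _ pp0.
  set mu := pp / al.
  have mu0 : mu != 0 by rewrite mulf_neq0 ?invr_eq0.
  exists (scA j0 mu B); split; first exact: Ginv.
  exists (scp j0 mu b); split; first by rewrite mem_scA.
  split => j hj; rewrite /scp ffunE; case: (j =P j0) => [ej|nej].
  - by rewrite ej h2 //= Ea /= /mu divfK // Ep.
  - apply: h1; rewrite ltn_neqAle -ltnS hj andbT.
    by apply/eqP => e; apply: nej; apply: val_inj.
  - by move: hj; rewrite ej /= ltnn.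
  - exact/h2/ltnW.
have [B [GB [b [bB [h1 _]]]]] := step k (leqnn k).
exists B; split => //; suff <- : b = p by [].
by apply/ffunP => j; apply: h1; apply: ltn_ord.
Qed.


Unset Implicit Arguments.
Local Open Scope fset_scope.

Theorem proposition5p4 (R : realType) (k : nat) (d : 'I_k -> nat) (r : nat)
  (G : {fset pt R[i] k} -> Prop) :
  (1 <= k)%N ->
  (forall i, 2 <= d i)%N ->
  is_rank d (Wten R[i] d) r ->
  irr_component r (Sdec d (Wten R[i] d) r) G ->
  dim_ge r (Sdec d (Wten R[i] d) r) G k /\
  forall p : pt R[i] k,
    (forall i, p i != None /\ p i != Some 0) ->
    exists A : {fset pt R[i] k}, G A /\ p \in A.
Proof.
move=> _ d2 _ HG.
exact: (@main_gen (R[i] : numFieldType) k d r G d2 HG).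
Qed.
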